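(* Let $N$ be a 2-step nilpotent real Lie group with a left-invariant pseudo-Riemannian metric $\langle\cdot,\cdot\rangle$ for which the center $\mathfrak z$ of its Lie algebra is nondegenerate. Then $N$ is of pseudo-$H$-type (of $H$-type when the metric is Riemannian) if and only if every nondegenerate semi-central plane has sectional curvature $K=\tfrac14$.
   Context: Put $\mathfrak v=\mathfrak z^\perp$. For $z\in\mathfrak z$ define $j(z)\in\mathrm{End}(\mathfrak v)$ by $\langle [x,y],z\rangle=\langle y,j(z)x\rangle$ for all $x,y\in\mathfrak v$. $N$ is of pseudo-$H$-type if $j(z)^2=-\langle z,z\rangle\,\mathrm{Id}_{\mathfrak v}$ for all $z\in\mathfrak z$; when the metric is Riemannian this is called $H$-type. A semi-central plane is a 2-plane spanned by a vector of $\mathfrak z$ and a vector of $\mathfrak v$; nondegenerate means the metric restricted to it is nondegenerate. Sectional curvature is that of the Levi-Civita connection. *)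

(* Defs.v *)
(* Left-invariant pseudo-Riemannian geometry of a Lie group
   reduced to its Lie algebra n = R^n ('rV[R]_n), metric given by a symmetric
   invertible Gram matrix G, Levi-Civita connection on left-invariant fields
   given by the Koszul formula. *)
From HB Require Import structures.
From mathcomp Require Import all_boot all_order all_algebra.
From mathcomp Require Import reals.
Set Implicit Arguments. Unset Strict Implicit. Unset Printing Implicit Defensive.
Import Order.TTheory GRing.Theory Num.Theory.
Local Open Scope ring_scope.

Section Defs.
Variables (R : realType) (n : nat).
Notation V := 'rV[R]_n.

Definition form (G : 'M[R]_n) (x y : V) : R := (x *m G *m y^T) 0 0.

Definition lie_bracket (br : V -> V -> V) : Prop :=
  [/\ forall (a : R) x y w, br (a *: x + y) w = a *: br x w + br y w,
      forall x y, br x y = - br y x &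
      forall x y w, br x (br y w) + br y (br w x) + br w (br x y) = 0].

Definition two_step_nilpotent (br : V -> V -> V) : Prop :=
  (forall x y w, br (br x y) w = 0) /\ (exists x y, br x y <> 0).

Definition pseudo_metric (G : 'M[R]_n) : Prop := G^T = G /\ G \in unitmx.

Definition in_center (br : V -> V -> V) (z : V) : Prop := forall x, br z x = 0.

Definition center_nondegenerate (br : V -> V -> V) (G : 'M[R]_n) : Prop :=
  forall z, in_center br z -> (forall z', in_center br z' -> form G z z' = 0) -> z = 0.

Definition in_v (br : V -> V -> V) (G : 'M[R]_n) (x : V) : Prop :=
  forall z, in_center br z -> form G x z = 0.

(* Riesz representative: the unique u with <u,w> = f w for linear f *)
Definition riesz (G : 'M[R]_n) (f : V -> R) : V :=
  (\row_i f (delta_mx (0 : 'I_1) i)) *m invmx G.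

Definition jmap (br : V -> V -> V) (G : 'M[R]_n) (z x : V) : V :=
  riesz G (fun w => form G (br x w) z).

Definition pseudo_H_type (br : V -> V -> V) (G : 'M[R]_n) : Prop :=
  forall z, in_center br z -> forall x, in_v br G x ->
    jmap br G z (jmap br G z x) = - (form G z z) *: x.

(* Levi-Civita connection on left-invariant fields (Koszul formula) *)
Definition nabla (br : V -> V -> V) (G : 'M[R]_n) (x y : V) : V :=
  riesz G (fun w => 2^-1 * (form G (br x y) w - form G (br y w) x + form G (br w x) y)).

Definition curv (br : V -> V -> V) (G : 'M[R]_n) (x y w : V) : V :=
  nabla br G x (nabla br G y w) - nabla br G y (nabla br G x w) - nabla br G (br x y) w.

Definition sec_curv (br : V -> V -> V) (G : 'M[R]_n) (x y : V) : R :=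
  form G (curv br G x y y) x / (form G x x * form G y y - form G x y ^+ 2).

Definition lin_indep2 (x y : V) : Prop :=
  forall a b : R, a *: x + b *: y = 0 -> a = 0 /\ b = 0.

Definition semicentral_curv_quarter (br : V -> V -> V) (G : 'M[R]_n) : Prop :=
  forall z x, in_center br z -> in_v br G x -> lin_indep2 z x ->
    form G z z * form G x x - form G z x ^+ 2 != 0 ->
    sec_curv br G z x = 4^-1.

End Defs.

(* Main.v *)
Require Import Defs.
From HB Require Import structures.
From mathcomp Require Import all_boot all_order all_algebra.
From mathcomp Require Import reals.
From mathcomp Require Import ring lra.
From Stdlib Require Import Classical_Prop.
Import Order.TTheory GRing.Theory Num.Theory.
Local Open Scope ring_scope.

Section Work.
Variables (R : realType) (n : nat) (br : 'rV[R]_n -> 'rV[R]_n -> 'rV[R]_n) (G : 'M[R]_n).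
Hypothesis Hbr : lie_bracket br.
Hypothesis HG : pseudo_metric G.
Notation V := 'rV[R]_n.
Local Notation fm := (Defs.form G).

Lemma formDl x y w : fm (x + y) (w) = fm (x) (w) + fm (y) (w).
Proof. by rewrite /Defs.form !mulmxDl mxE. Qed.
Lemma formZl a x w : fm (a *: x) (w) = a * fm (x) (w).
Proof. by rewrite /Defs.form -!scalemxAl mxE. Qed.
Lemma formDr x y w : fm (w) (x + y) = fm (w) (x) + fm (w) (y).
Proof. by rewrite /Defs.form linearD /= mulmxDr mxE. Qed.
Lemma formZr a x w : fm (w) (a *: x) = a * fm (w) (x).
Proof. by rewrite /Defs.form linearZ /= -scalemxAr mxE. Qed.
Lemma form0l w : fm (0) (w) = 0.
Proof. by rewrite -(scale0r 0) formZl mul0r. Qed.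
Lemma form0r w : fm (w) (0) = 0.
Proof. by rewrite -(scale0r 0) formZr mul0r. Qed.
Lemma formNl x w : fm (- x) (w) = - fm (x) (w).
Proof. by rewrite -scaleN1r formZl mulN1r. Qed.
Lemma formNr x w : fm (w) (- x) = - fm (w) (x).
Proof. by rewrite -scaleN1r formZr mulN1r. Qed.
Lemma formBl x y w : fm (x - y) (w) = fm (x) (w) - fm (y) (w).
Proof. by rewrite formDl formNl. Qed.
Lemma formBr x y w : fm (w) (x - y) = fm (w) (x) - fm (w) (y).
Proof. by rewrite formDr formNr. Qed.
Lemma formC x y : fm (x) (y) = fm (y) (x).
Proof.
case: HG => HGt _.
rewrite /Defs.form -[in LHS](trmxK (x *m G *m y^T)) [in LHS]mxE.
by rewrite !trmx_mul trmxK HGt mulmxA.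
Qed.

Lemma form_nondeg u : (forall w, fm (u) (w) = 0) -> u = 0.
Proof.
case: HG => _ HGu Hu.
have : u *m G = 0.
  apply/rowP => j; rewrite [RHS]mxE.
  have := Hu (delta_mx 0 j); rewrite /Defs.form trmx_delta -colE mxE => ->.
  by [].
by move=> /(congr1 (mulmx^~ (invmx G))); rewrite mulmxK // mul0mx.
Qed.

Definition linf (f : V -> R) := forall a x y, f (a *: x + y) = a * f x + f y.

Lemma linf_sum f (a : 'I_n -> R) (u : 'I_n -> V) : linf f ->
  f (\sum_j a j *: u j) = \sum_j a j * f (u j).
Proof.
move=> Hf.
have f0 : f 0 = 0.
  have := Hf 1 0 0; rewrite scaler0 addr0 mul1r.
  by move=> /(congr1 (fun t => t - f 0)); rewrite subrr addrK => <-.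
elim/big_rec2: _ => // i y1 y2 _ <-.
by rewrite Hf.
Qed.

Lemma form_riesz f : linf f -> forall w, fm (riesz G f) (w) = f w.
Proof.
case: HG => _ HGu Hf w.
rewrite /Defs.form /riesz mulmxKV // mxE {2}(row_sum_delta w) (linf_sum _ _ _ Hf).
by apply: eq_bigr => j _; rewrite !mxE mulrC.
Qed.

Lemma riesz_uniq f u : linf f -> (forall w, fm (u) (w) = f w) -> u = riesz G f.
Proof.
move=> Hf Hu; apply/eqP; rewrite -subr_eq0; apply/eqP/form_nondeg => w.
by rewrite formBl Hu form_riesz // subrr.
Qed.


Lemma brDl x y w : br (x + y) w = br x w + br y w.
Proof. have [H _ _] := Hbr. by rewrite -{1}[x]scale1r H scale1r. Qed.
Lemma br0l w : br 0 w = 0.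
Proof.
have := brDl 0 0 w; rewrite addr0.
by move=> /(congr1 (fun t => t - br 0 w)); rewrite subrr addrK => <-.
Qed.
Lemma brZl a x w : br (a *: x) w = a *: br x w.
Proof. by have [H _ _] := Hbr; rewrite -[a *: x]addr0 H br0l addr0. Qed.
Lemma brA x y : br x y = - br y x.
Proof. by have [_ H _] := Hbr; apply: H. Qed.
Lemma brDr x y w : br w (x + y) = br w x + br w y.
Proof. by rewrite brA brDl opprD -!brA. Qed.
Lemma brZr a x w : br w (a *: x) = a *: br w x.
Proof. by rewrite brA brZl -scalerN -brA. Qed.
Lemma br0r w : br w 0 = 0.
Proof. by rewrite brA br0l oppr0. Qed.
Lemma brxx x : br x x = 0.
Proof.
have H : br x x + br x x = 0 by rewrite {1}brA addNr.
have : (2%:R : R) *: br x x = 0 by rewrite scaler_nat mulr2n.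
by move/eqP; rewrite scaler_eq0 pnatr_eq0 /= => /eqP.
Qed.

Lemma cen_l z : in_center br z -> forall x, br z x = 0.
Proof. by move=> Hz; apply: Hz. Qed.
Lemma cen_r z : in_center br z -> forall x, br x z = 0.
Proof. by move=> Hz x; rewrite brA Hz oppr0. Qed.
Arguments cen_l {z}.
Arguments cen_r {z}.

Lemma jmapE z x w : fm (jmap br G z x) w = fm (br x w) z.
Proof.
rewrite /jmap form_riesz // => a u y.
by rewrite brDr brZr formDl formZl.
Qed.

Lemma nablaE x y w : fm (nabla br G x y) w =
  2^-1 * (fm (br x y) w - fm (br y w) x + fm (br w x) y).
Proof.
rewrite /nabla form_riesz // => a u v.
rewrite formDr formZr brDr brZr brDl brZl formDl formZl formDl formZl.
ring.
Qed.

Lemma curv_semi z x : in_center br z ->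
  fm (curv br G z x x) z = 4^-1 * fm (jmap br G z x) (jmap br G z x).
Proof.
move=> Hz.
rewrite /curv !formBl !nablaE.
rewrite !(cen_l Hz) !(cen_r Hz) ?br0l ?br0r ?brxx ?form0l ?form0r.
rewrite -jmapE formC nablaE !(cen_l Hz) !(cen_r Hz) ?form0l ?form0r.
rewrite -[fm (br x _) z]jmapE.
have -> : (4 : R) = 2 * 2 by rewrite -natrM.
rewrite invfM; ring.
Qed.


Lemma eq_by_form u u' : (forall w, fm u w = fm u' w) -> u = u'.
Proof.
move=> H; apply/eqP; rewrite -subr_eq0; apply/eqP/form_nondeg => w.
by rewrite formBl H subrr.
Qed.

Lemma jmap_linx z a x y : jmap br G z (a *: x + y) = a *: jmap br G z x + jmap br G z y.
Proof.
apply: eq_by_form => w.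
by rewrite formDl formZl !jmapE brDl brZl formDl formZl.
Qed.

Lemma jmap_linz x a z z' : jmap br G (a *: z + z') x = a *: jmap br G z x + jmap br G z' x.
Proof.
apply: eq_by_form => w.
by rewrite formDl formZl !jmapE formDr formZr.
Qed.

Lemma jmap0x z : jmap br G z 0 = 0.
Proof. by apply: eq_by_form => w; rewrite jmapE br0l !form0l. Qed.
Lemma jmap0z x : jmap br G 0 x = 0.
Proof. by apply: eq_by_form => w; rewrite jmapE !form0r form0l. Qed.

Lemma jmap_skew z a b : fm (jmap br G z a) b = - fm (jmap br G z b) a.
Proof. by rewrite !jmapE brA formNl. Qed.

Lemma perturb (A B D E : R) : E != 0 ->
  (forall t, t != 0 -> 2 * t * D + t ^+ 2 * E != 0 -> A + t * B = 0) -> A = 0.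
Proof.
move=> HE H.
set s := `|2 * D / E|.
have Hs : - s <= 2 * D / E.
  by rewrite /s -normrN lerNl ler_norm.
have good : forall t, s < t -> A + t * B = 0.
  move=> t Ht; apply: H.
    by rewrite gt_eqF // (le_lt_trans (normr_ge0 _) Ht).
  have -> : 2 * t * D + t ^+ 2 * E = t * E * (2 * D / E + t) by field.
  rewrite !mulf_neq0 //.
    by rewrite gt_eqF // (le_lt_trans (normr_ge0 _) Ht).
  rewrite gt_eqF //; lra.
have H1 := good (s + 1) ltac:(lra).
have H2 := good (s + 2) ltac:(lra).
have HB : B = 0 by lra.
by move: H1; rewrite HB mulr0 addr0.
Qed.

Definition linv (L : V -> V) := forall a x y, L (a *: x + y) = a *: L x + L y.

Lemma quad_expand L c u v t : linv L ->
  fm (L (u + t *: v)) (L (u + t *: v)) - c * fm (u + t *: v) (u + t *: v) =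
  (fm (L u) (L u) - c * fm u u) + t * (2 * (fm (L u) (L v) - c * fm u v))
   + t ^+ 2 * (fm (L v) (L v) - c * fm v v).
Proof.
move=> HL.
rewrite [u + _]addrC HL.
rewrite !formDl !formDr !formZl !formZr (formC (L v) (L u)) (formC v u).
ring.
Qed.

Lemma perturb_form L c u v : linv L -> fm u u = 0 -> fm v v != 0 ->
  fm (L v) (L v) - c * fm v v = 0 ->
  (forall t, t != 0 -> fm (u + t *: v) (u + t *: v) != 0 ->
     fm (L (u + t *: v)) (L (u + t *: v)) - c * fm (u + t *: v) (u + t *: v) = 0) ->
  fm (L u) (L u) - c * fm u u = 0.
Proof.
move=> HL Hu Hv Hq H.
apply: (@perturb _ (2 * (fm (L u) (L v) - c * fm u v)) (fm u v) (fm v v) Hv).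
move=> t Ht Hn.
have := H t Ht.
rewrite quad_expand // Hq mulr0 addr0 => -> //.
rewrite formDl !formDr !formZl !formZr Hu (formC v u).
move: Hn; apply: contra => /eqP Hn; apply/eqP; rewrite -Hn; ring.
Qed.


Hypothesis Hcn : center_nondegenerate br G.

Lemma linv_sum L (a : 'I_n -> R) (u : 'I_n -> V) : linv L ->
  L (\sum_j a j *: u j) = \sum_j a j *: L (u j).
Proof.
move=> HL.
have L0 : L 0 = 0.
  have := HL 1 0 0; rewrite scaler0 addr0 scale1r.
  by move=> /(congr1 (fun t => t - L 0)); rewrite subrr addrK => <-.
elim/big_rec2: _ => // i y1 y2 _ <-.
by rewrite HL.
Qed.

Lemma linv_brl w : linv (br^~ w).
Proof. by move=> a x y; rewrite brDl brZl. Qed.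
Lemma linv_brr u : linv (br u).
Proof. by move=> a x y; rewrite brDr brZr. Qed.

Definition Bi (i : 'I_n) : 'M[R]_n :=
  \matrix_(k, l) (br (delta_mx 0 k) (delta_mx 0 i)) 0 l.

Lemma mulBi u i : u *m Bi i = br u (delta_mx 0 i).
Proof.
rewrite mulmx_sum_row {2}(row_sum_delta u) (linv_sum _ _ _ (linv_brl _)).
apply: eq_bigr => k _; congr (_ *: _).
by apply/rowP => l; rewrite !mxE.
Qed.

Definition Cmat : 'M[R]_n := (\bigcap_(i < n) kermx (Bi i))%MS.

Lemma centerP u : in_center br u <-> (u <= Cmat)%MS.
Proof.
split.
  move=> Hu; apply/sub_bigcapmxP => i _; apply/sub_kermxP.
  by rewrite mulBi Hu.
move=> /sub_bigcapmxP Hu x.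
rewrite (row_sum_delta x) (linv_sum _ _ _ (linv_brr _)).
apply: big1 => i _.
have /sub_kermxP := Hu i isT.
by rewrite mulBi => ->; rewrite scaler0.
Qed.

Lemma formE u w : fm u w = (u *m G *m w^T) 0 0.
Proof. by []. Qed.

Lemma decomp w : exists c, in_center br c /\ in_v br G (w - c).
Proof.
set C := Cmat.
set P := G *m C^T.
set K := C *m P.
have Hker : (C :&: kermx P)%MS == 0.
  apply/rowV0P => v; rewrite sub_capmx => /andP [HvC /sub_kermxP HvP].
  apply: Hcn; first by apply/centerP.
  move=> z' /centerP /submxP [E ->].
  by rewrite formE trmx_mul mulmxA -(mulmxA v) HvP mul0mx mxE.
have HrK : \rank K = \rank C.
  by rewrite -(mxrank_mul_ker C P) (eqP Hker) mxrank0 addn0.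
have HKP : (K <= P)%MS by apply: submxMl.
have HPK : (P <= K)%MS.
  have [Hle Heq] := mxrank_leqif_eq HKP.
  have : (K == P)%MS.
    rewrite -Heq eqn_leq Hle /= HrK -(mxrank_tr C).
    by rewrite /P; apply: mxrankM_maxr.
  by move=> /andP [].
have /submxP [D HD] : (w *m P <= K)%MS by apply: submx_trans (submxMl _ _) HPK.
exists (D *m C); split; first by apply/centerP; apply: submxMl.
move=> z' /centerP /submxP [E ->].
rewrite formE trmx_mul mulmxA -(mulmxA (w - _)) mulmxBl -/P HD.
by rewrite /K !mulmxA subrr mul0mx mxE.
Qed.


Lemma in_v_lin a x y : in_v br G x -> in_v br G y -> in_v br G (a *: x + y).
Proof. by move=> Hx Hy z Hz; rewrite formDl formZl Hx // Hy // mulr0 addr0. Qed.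

Lemma center_lin a z z' : in_center br z -> in_center br z' -> in_center br (a *: z + z').
Proof. by move=> Hz Hz' x; rewrite brDl brZl Hz Hz' scaler0 addr0. Qed.

Arguments in_v_lin a {x y}.
Arguments center_lin a {z z'}.

Lemma v_zero : (forall x, in_v br G x -> fm x x = 0) -> forall x, in_v br G x -> x = 0.
Proof.
move=> H x Hx; apply: form_nondeg => w.
have [c [Hc Hwc]] := decomp w.
have -> : w = c + (w - c) by rewrite addrC subrK.
rewrite formDr (Hx c Hc) add0r.
have := H (1 *: x + (w - c)) (in_v_lin 1 Hx Hwc).
set y := w - c in Hwc *; clearbody y. rewrite scale1r formDl !formDr (H x Hx) (H y Hwc) (formC y x).
lra.
Qed.

Lemma C_zero : (forall z, in_center br z -> fm z z = 0) -> forall z, in_center br z -> z = 0.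
Proof.
move=> H z Hz; apply: Hcn => // z' Hz'.
have := H (1 *: z + z') (center_lin 1 Hz Hz').
rewrite scale1r formDl !formDr (H z Hz) (H _ Hz') (formC z' z).
lra.
Qed.

Lemma jmap_center z c : in_center br c -> jmap br G z c = 0.
Proof.
by move=> Hc; apply: eq_by_form => w; rewrite jmapE (cen_l Hc) !form0l.
Qed.

Section Conv.
Hypothesis Hq : semicentral_curv_quarter br G.

Lemma stepA z x : in_center br z -> in_v br G x -> fm z z != 0 -> fm x x != 0 ->
  fm (jmap br G z x) (jmap br G z x) - fm z z * fm x x = 0.
Proof.
move=> Hz Hx Hzz Hxx.
have Hzx : fm z x = 0 by rewrite formC; apply: Hx.
have Hli : lin_indep2 z x.
  move=> a b Hab.
  have h1 := congr1 (fm^~ z) Hab.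
  have h2 := congr1 (fm^~ x) Hab.
  rewrite /= formDl !formZl form0l (Hx z Hz) mulr0 addr0 in h1.
  rewrite /= formDl !formZl form0l Hzx mulr0 add0r in h2.
  move/eqP: h1; rewrite mulf_eq0 (negbTE Hzz) orbF => /eqP ->.
  by move/eqP: h2; rewrite mulf_eq0 (negbTE Hxx) orbF => /eqP ->.
have Hden : fm z z * fm x x - fm z x ^+ 2 != 0.
  by rewrite Hzx expr2 mul0r subr0 mulf_neq0.
have := Hq z x Hz Hx Hli Hden.
rewrite /sec_curv curv_semi // Hzx expr2 mul0r subr0.
set Q := fm _ _.
set D := fm z z * fm x x.
have HD : D != 0 by rewrite mulf_neq0.
move=> H.
have -> : Q = 4 * (4^-1 * Q / D) * D.
  by field.
by rewrite H mulrA divff ?pnatr_eq0 // mul1r subrr.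
Qed.

Lemma stepB z x : in_center br z -> fm z z != 0 -> in_v br G x ->
  fm (jmap br G z x) (jmap br G z x) - fm z z * fm x x = 0.
Proof.
move=> Hz Hzz Hx.
case: (eqVneq (fm x x) 0) => Hxx; last exact: stepA.
case: (classic (exists x0, in_v br G x0 /\ fm x0 x0 != 0)) => [[x0 [Hx0 Hx0n]] | Hno].
  apply: (@perturb_form (jmap br G z) (fm z z) x x0 (jmap_linx z) Hxx Hx0n (stepA z x0 Hz Hx0 Hzz Hx0n)).
  move=> t Ht Hn; apply: stepA => //.
  by rewrite addrC; apply: in_v_lin.
have -> : x = 0.
  apply: v_zero Hx => y Hy; apply/eqP/negPn/negP => Hyy.
  by apply: Hno; exists y.
by rewrite jmap0x !form0l mulr0 subrr.
Qed.

Lemma stepC z x : in_center br z -> in_v br G x ->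
  fm (jmap br G z x) (jmap br G z x) - fm z z * fm x x = 0.
Proof.
move=> Hz Hx.
case: (eqVneq (fm z z) 0) => Hzz; last exact: stepB.
case: (classic (exists z0, in_center br z0 /\ fm z0 z0 != 0)) => [[z0 [Hz0 Hz0n]] | Hno].
  rewrite mulrC.
  have HL : linv (fun z => jmap br G z x) by move=> a u v; apply: jmap_linz.
  apply: (@perturb_form _ (fm x x) z z0 HL Hzz Hz0n).
    by rewrite mulrC; apply: stepB.
  move=> t Ht Hn; rewrite mulrC; apply: stepB => //.
  by rewrite addrC; apply: center_lin.
have -> : z = 0.
  apply: C_zero Hz => y Hy; apply/eqP/negPn/negP => Hyy.
  by apply: Hno; exists y.
by rewrite jmap0z !form0l mul0r subrr.
Qed.

Lemma stepD z x y : in_center br z -> in_v br G x -> in_v br G y ->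
  fm (jmap br G z x) (jmap br G z y) = fm z z * fm x y.
Proof.
move=> Hz Hx Hy.
have := quad_expand (jmap br G z) (fm z z) x y 1 (jmap_linx z).
rewrite stepC //; last by rewrite addrC; apply: in_v_lin.
rewrite stepC // stepC // expr1n !mul1r.
lra.
Qed.

Lemma conv : pseudo_H_type br G.
Proof.
move=> z Hz x Hx; apply: eq_by_form => w.
have [c [Hc Hwc]] := decomp w.
have -> : w = c + (w - c) by rewrite addrC subrK.
rewrite jmap_skew.
have -> : jmap br G z (c + (w - c)) = jmap br G z (w - c).
  by rewrite -[c]scale1r jmap_linx jmap_center // scaler0 add0r.
set y := w - c in Hwc *; clearbody y.
rewrite formC stepD // formZl formDr (Hx c Hc) add0r.
by rewrite mulNr.
Qed.

End Conv.

Lemma forward : pseudo_H_type br G -> semicentral_curv_quarter br G.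
Proof.
move=> HH z x Hz Hx _ Hden.
have Hzx : fm z x = 0 by rewrite formC; apply: Hx.
move: Hden; rewrite /sec_curv curv_semi // Hzx expr2 mul0r subr0 => Hden.
rewrite [fm (jmap _ _ _ _) _]jmap_skew HH // formZl mulNr opprK.
by rewrite -mulrA divff // mulr1.
Qed.

Lemma main_iff : pseudo_H_type br G <-> semicentral_curv_quarter br G.
Proof. by split; [apply: forward | apply: conv]. Qed.

End Work.

Theorem corollary4p9 (R : realType) (n : nat) (br : 'rV[R]_n -> 'rV[R]_n -> 'rV[R]_n)
    (G : 'M[R]_n) :
  lie_bracket br -> two_step_nilpotent br -> pseudo_metric G ->
  center_nondegenerate br G ->
  (pseudo_H_type br G <-> semicentral_curv_quarter br G).
Proof.
move=> Hbr _ HG Hcn.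
exact: (@main_iff R n br G Hbr HG Hcn).
Qed.
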